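(* (a) The map $\Upsilon$ is a bijection from $\mathcal{D}$ to $\bar{\mathcal{D}}$. (b) $\theta_t(\bar{\mathcal{D}})\subseteq\bar{\mathcal{D}}$ for any $t\geq 0$. (c) $\Upsilon^{-1}\circ\theta_t\circ\Upsilon(\mathcal{D})\subseteq{\mathcal{D}}$ for any $t\geq 0$.
   Context: Fix $I\in\mathbb{N}$. $\mathcal{C}=\{f\in C(\mathbb{R}_+,\mathbb{R}_+):f(0)=0,f\text{ non-decreasing}\}$, $\mathcal{C}^\uparrow=\{f\in\mathcal{C}:f\text{ strictly increasing},\lim_{u\to\infty}f(u)=\infty\}$. For $\psi\in\mathcal{C}^I$, $\phi_i(u):=u-\sum_{j=1}^I2(i\wedge j)\psi_j(u)$. $\mathcal{F}:=\{\psi\in\mathcal{C}^I:\phi_I\in\mathcal{C}^\uparrow\}$; for $\psi\in\mathcal{F}$ each $\phi_i\in\mathcal{C}^\uparrow$ and $\Upsilon(\psi):=(\psi_i\circ\phi_i^{-1})_{i=1}^I$, which is a bijection $\mathcal{F}\to\mathcal{C}^I$ with inverse $\Upsilon^{-1}$. $\mathcal{D}:=\{\psi\in\mathcal{F}:\sum_{i=1}^Ii\sup_{u_1\ne u_2}\frac{\psi_i(u_1)-\psi_i(u_2)}{\phi_i(u_1)-\phi_i(u_2)}<\frac12\}$, $\bar{\mathcal{D}}:=\{\bar\psi\in\mathcal{C}^I:\sum_{i=1}^Ii\sup_{z_1\ne z_2}\frac{\bar\psi_i(z_1)-\bar\psi_i(z_2)}{z_1-z_2}<\frac12\}$. For $\bar\psi\in\mathcal{C}^I$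 and $t\ge0$, $(\theta_t\bar\psi)_i(z):=\bar\psi_i((z-it)\vee0)$. *)

(* Defs.v *)
From HB Require Import structures.
From mathcomp Require Import all_boot all_order all_algebra.
From mathcomp Require Import all_classical all_reals all_analysis.
Set Implicit Arguments. Unset Strict Implicit. Unset Printing Implicit Defensive.
Import Order.TTheory GRing.Theory Num.Theory.
Import numFieldNormedType.Exports.
Local Open Scope classical_set_scope.
Local Open Scope ring_scope.

(* Functions on R_+ are represented as functions R -> R of which only the
   values on [0, +oo) matter; all predicates below only look at u >= 0. *)
Section Defs.
Variable R : realType.

Definition isC (f : R -> R) : Prop :=
  [/\ {within [set x : R | 0 <= x], continuous f},
      f 0 = 0,
      (forall x y, 0 <= x -> x <= y -> f x <= f y) &
      (forall x, 0 <= x -> 0 <= f x)].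

Definition isCup (f : R -> R) : Prop :=
  [/\ isC f,
      (forall x y, 0 <= x -> x < y -> f x < f y) &
      f x @[x --> +oo] --> +oo].

Variable I : nat.

(* an element psi of C^I is indexed by i : 'I_I, standing for index i.+1 *)
Definition phiN (psi : 'I_I -> R -> R) (k : nat) (u : R) : R :=
  u - \sum_(j < I) 2 * (minn k j.+1)%:R * psi j u.

Definition phi (psi : 'I_I -> R -> R) (i : 'I_I) : R -> R := phiN psi i.+1.

Definition inC (psi : 'I_I -> R -> R) : Prop := forall i, isC (psi i).

Definition Fset (psi : 'I_I -> R -> R) : Prop :=
  inC psi /\ isCup (phiN psi I).

(* inverse on R_+ of a function (meaningful for f in C^up) *)
Definition finv (f : R -> R) (z : R) : R :=
  xget 0 [set u | 0 <= u /\ f u = z].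

Definition Upsilon (psi : 'I_I -> R -> R) : 'I_I -> R -> R :=
  fun i z => psi i (finv (phi psi i) z).

Definition supquot (g h : R -> R) : \bar R :=
  ereal_sup [set x : \bar R | exists u1 u2, [/\ 0 <= u1, 0 <= u2, u1 <> u2 &
                x = ((g u1 - g u2) / (h u1 - h u2))%:E]].

Definition Dset (psi : 'I_I -> R -> R) : Prop :=
  Fset psi /\
  (\sum_(i < I) (i.+1%:R)%:E * supquot (psi i) (phi psi i) < (2^-1)%:E)%E.

Definition Dbar (pb : 'I_I -> R -> R) : Prop :=
  inC pb /\
  (\sum_(i < I) (i.+1%:R)%:E * supquot (pb i) id < (2^-1)%:E)%E.

Definition theta (t : R) (pb : 'I_I -> R -> R) : 'I_I -> R -> R :=
  fun i z => pb i (Num.max (z - i.+1%:R * t) 0).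

Definition eqI (f g : 'I_I -> R -> R) : Prop :=
  forall i z, 0 <= z -> f i z = g i z.

End Defs.

(* Main.v *)
From HB Require Import structures.
From mathcomp Require Import all_boot all_order all_algebra.
From mathcomp Require Import all_classical all_reals all_analysis.
From mathcomp Require Import ring lra zify.
Require Import Defs.
Set Implicit Arguments. Unset Strict Implicit. Unset Printing Implicit Defensive.
Import Order.TTheory GRing.Theory Num.Theory.
Import numFieldNormedType.Exports.
Local Open Scope classical_set_scope.
Local Open Scope ring_scope.

Section S.
Variable R : realType.

Lemma lip_cont_glob (g : R -> R) K : 0 <= K ->
  (forall x y, `|g x - g y| <= K * `|x - y|) -> continuous g.
Proof.
move=> K0 Hg x; apply/cvgrPdist_le => e e0.
have K1 : 0 < K + 1 by rewrite ltr_pwDr.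
have d0 : 0 < e / (K + 1) by rewrite divr_gt0.
near=> y.
apply: (le_trans (Hg x y)).
have hd : `|x - y| < e / (K + 1).
  near: y; exact: (cvgr_dist_lt id x (@cvg_id _ (nbhs x)) _ d0).
apply: (le_trans (y := (K+1) * (e / (K+1)))).
  apply: (le_trans (y := K * (e / (K+1)))).
    by apply: ler_wpM2l => //; apply: ltW.
  by apply: ler_wpM2r; [apply: ltW | rewrite lerDl].
by rewrite mulrC divfK ?gt_eqF.
Unshelve. all: end_near.
Qed.

Lemma max0_lip (x y s : R) : `|Num.max (x - s) 0 - Num.max (y - s) 0| <= `|x - y|.
Proof.
have h1 := ler_norm (x - y); have h2 := ler_norm (y - x); rewrite distrC in h2.
rewrite ler_norml; case: (leP (x - s) 0); case: (leP (y - s) 0) => hy hx;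
  apply/andP; split; lra.
Qed.

Lemma lip_cont (f : R -> R) K : 0 <= K ->
  (forall x y, 0 <= x -> 0 <= y -> `|f x - f y| <= K * `|x - y|) ->
  {within [set x : R | 0 <= x], continuous f}.
Proof.
move=> K0 Hf.
have Hg : continuous (fun x : R => f (Num.max x 0)).
  apply: (lip_cont_glob K0) => x y.
  apply: le_trans (Hf _ _ _ _) _; rewrite ?le_max ?lexx ?orbT //.
  apply: ler_wpM2l => //.
  by have := max0_lip x y 0; rewrite !subr0.
apply: (subspace_eq_continuous (f := fun x : R => f (Num.max x 0))); last exact: continuous_subspaceT.
move=> x; rewrite inE /= => x0.
by rewrite max_l.
Qed.

Lemma mono_lip (f : R -> R) K :
  (forall x y, 0 <= x -> x <= y -> 0 <= f y - f x <= K * (y - x)) ->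
  forall x y, 0 <= x -> 0 <= y -> `|f x - f y| <= K * `|x - y|.
Proof.
move=> H x y x0 y0; case: (leP x y) => hxy.
  have /andP[h1 h2] := H x y x0 hxy.
  by rewrite distrC (distrC x) !ger0_norm // subr_ge0.
have /andP[h1 h2] := H y x y0 (ltW hxy).
by rewrite !ger0_norm // subr_ge0 ltW.
Qed.

Variable I : nat.
Implicit Types psi pb : 'I_I -> R -> R.

Lemma isC_mono f : isC f -> forall x y : R, 0 <= x -> x <= y -> f x <= f y.
Proof. by case. Qed.

Lemma phiN_cont psi : inC psi -> forall k,
  {within [set x : R | 0 <= x], continuous (phiN psi k)}.
Proof.
move=> hC k.
have hid : {within [set x : R | 0 <= x], continuous (fun u : R => u)}.
  by apply: continuous_subspaceT => y; exact: cvg_id.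
move=> x; rewrite /phiN.
apply: cvgB.
  exact: hid.
apply: cvg_big => //; first exact: add_continuous.
move=> j _; apply: cvgMl_tmp.
by case: (hC j) => + _ _ _; apply.
Qed.

Lemma phiN0 psi : inC psi -> forall k, phiN psi k 0 = 0.
Proof.
move=> hC k; rewrite /phiN big1 ?subr0 // => j _.
by case: (hC j) => _ -> _ _; rewrite mulr0.
Qed.

Lemma phiN_le psi : inC psi -> forall k, (k <= I)%N -> forall x y : R, 0 <= x -> x <= y ->
  phiN psi I y - phiN psi I x <= phiN psi k y - phiN psi k x.
Proof.
move=> hC k kI x y x0 xy; rewrite /phiN.
set SIy := \sum_(j < I) _. set SIx := \sum_(j < I) _.
set Sky := \sum_(j < I) _. set Skx := \sum_(j < I) _.
suff : Sky - Skx <= SIy - SIx by lra.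
rewrite /SIy /SIx /Sky /Skx -!sumrB; apply: ler_sum => j _.
have hm := isC_mono (hC j) x0 xy.
have hk : (minn k j.+1)%:R <= (minn I j.+1)%:R :> R.
  by rewrite ler_nat; lia.
have h0 : 0 <= (minn k j.+1)%:R :> R by [].
nra.
Qed.

Lemma Fset_phi psi : Fset psi -> forall i : 'I_I,
  [/\ phi psi i 0 = 0,
      forall x y, 0 <= x -> x < y -> phi psi i x < phi psi i y,
      forall x, 0 <= x -> 0 <= phi psi i x &
      forall z, 0 <= z -> exists2 u, 0 <= u & phi psi i u = z].
Proof.
move=> [hC [[_ hI0 _ _] hIs hIoo]] i.
have iI : (i.+1 <= I)%N by [].
have h0 : phi psi i 0 = 0 by rewrite /phi phiN0.
have hs : forall x y, 0 <= x -> x < y -> phi psi i x < phi psi i y.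
  move=> x y x0 xy; have := phiN_le hC iI x0 (ltW xy).
  have := hIs x y x0 xy; rewrite /phi; lra.
split => //.
- move=> x; rewrite le0r => /orP[/eqP ->|x0]; first by rewrite h0.
  by rewrite -h0; apply/ltW/hs.
move=> z z0.
move/cvgryPge: hIoo => /(_ z) [M [_ HM]].
have [hM1 hM2] : M <= Num.max M 0 /\ 0 <= Num.max M 0.
  by case: (leP M 0) => h; split; lra.
set U := Num.max M 0 + 1.
have U0 : 0 <= U by rewrite /U; lra.
have hU : z <= phiN psi I U by apply: HM; rewrite /U; lra.
have hUi : z <= phi psi i U.
  have := phiN_le hC iI (lexx 0) U0; rewrite /phi phiN0 // in h0 *; rewrite phiN0 //; lra.
have [c cin hc] : exists2 c, c \in `[0, U] & phi psi i c = z.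
  apply: IVT => //.
    apply: (continuous_subspaceW (B := [set x : R | 0 <= x])); last exact: phiN_cont.
    by move=> x /=; rewrite in_itv /= => /andP[].
  rewrite h0; have hU0 : 0 <= phi psi i U by lra.
  by rewrite min_l // max_r // z0 hUi.
by exists c => //; move: cin; rewrite in_itv /= => /andP[].
Qed.

Lemma finv_spec psi : Fset psi -> forall (i : 'I_I) z, 0 <= z ->
  0 <= finv (phi psi i) z /\ phi psi i (finv (phi psi i) z) = z.
Proof.
move=> hF i z z0; have [_ _ _ hsur] := Fset_phi hF i.
rewrite /finv; apply: (@xgetPex _ 0 [set u | 0 <= u /\ phi psi i u = z]).
by have [u u0 hu] := hsur z z0; exists u.
Qed.

Lemma phi_inj psi : Fset psi -> forall (i : 'I_I) x y, 0 <= x -> 0 <= y ->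
  phi psi i x = phi psi i y -> x = y.
Proof.
move=> hF i x y x0 y0 hxy; have [_ hs _ _] := Fset_phi hF i.
case: (ltgtP x y) => // h.
- by have := hs _ _ x0 h; rewrite hxy ltxx.
- by have := hs _ _ y0 h; rewrite hxy ltxx.
Qed.

Lemma finv_phi psi : Fset psi -> forall (i : 'I_I) u, 0 <= u ->
  finv (phi psi i) (phi psi i u) = u.
Proof.
move=> hF i u u0; have [_ _ hn _] := Fset_phi hF i.
have [h1 h2] := finv_spec hF i (hn u u0).
exact: (phi_inj hF h1 u0 h2).
Qed.

Lemma supquot_Ups psi : Fset psi -> forall i : 'I_I,
  supquot (psi i) (phi psi i) = supquot (Upsilon psi i) id.
Proof.
move=> hF i; have [_ hs hn _] := Fset_phi hF i.
rewrite /supquot; congr ereal_sup; apply/seteqP; split => x [u1 [u2 [h1 h2 hne ->]]].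
- exists (phi psi i u1), (phi psi i u2); split => //; try exact: hn.
    by move=> /(phi_inj hF) => /(_ h1 h2).
  by rewrite /Upsilon !finv_phi.
- have [a1 b1] := finv_spec hF i h1; have [a2 b2] := finv_spec hF i h2.
  exists (finv (phi psi i) u1), (finv (phi psi i) u2); split => //.
    by move=> e; apply: hne; rewrite -b1 -b2 e.
  by rewrite /Upsilon /= b1 b2.
Qed.

Lemma supq_ge0 (g : R -> R) : (forall x y, 0 <= x -> x <= y -> g x <= g y) ->
  (0 <= supquot g id)%E.
Proof.
move=> hm; apply: le_trans (ereal_sup_ubound _); last first.
  exists 0, 1; split => //; first by apply/eqP; rewrite eq_sym oner_eq0.
rewrite lee_fin /= sub0r invrN invr1 mulrN1 opprB subr_ge0.
exact: hm.
Qed.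

Lemma supq_lip (g : R -> R) L : (forall x y, 0 <= x -> x <= y -> g x <= g y) ->
  supquot g id = L%:E -> forall x y, 0 <= x -> 0 <= y -> `|g x - g y| <= L * `|x - y|.
Proof.
move=> hm hL; have L0 : 0 <= L by rewrite -lee_fin -hL supq_ge0.
apply: mono_lip => x y x0 xy.
rewrite subr_ge0 hm //=.
move: xy; rewrite le_eqVlt => /orP[/eqP ->|xy]; first by rewrite !subrr mulr0.
have : (((g y - g x) / (y - x))%:E <= supquot g id)%E.
  apply: ereal_sup_ubound; exists y, x; split => //; first exact: le_trans (ltW xy).
  by move=> e; move: xy; rewrite e ltxx.
by rewrite hL lee_fin ler_pdivrMr // subr_gt0.
Qed.

Lemma sum_fin (a : 'I_I -> \bar R) : (forall i, 0 <= a i)%E ->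
  (\sum_(i < I) (i.+1%:R)%:E * a i < (2^-1)%:E)%E ->
  exists L : 'I_I -> R, [/\ forall i, a i = (L i)%:E, forall i, 0 <= L i &
     \sum_(i < I) i.+1%:R * L i < 2^-1].
Proof.
move=> ha hs.
have hfin : forall i, a i \is a fin_num.
  move=> i; rewrite fin_numE; apply/andP; split.
    by apply/eqP => e; have := ha i; rewrite e.
  apply/eqP => e.
  have : ((i.+1%:R)%:E * a i <= \sum_(i < I) (i.+1%:R)%:E * a i)%E.
    rewrite (bigD1 i) //=; apply: leeDl; apply: sume_ge0 => j _.
    by apply: mule_ge0 => //; rewrite lee_fin.
  rewrite e mulry gtr0_sg // mul1e => h.
  by have := le_lt_trans h hs; rewrite ltNge leey.
exists (fun i => fine (a i)); split.
- by move=> i; rewrite fineK.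
- by move=> i; rewrite -lee_fin fineK.
rewrite -lte_fin -sumEFin; apply: le_lt_trans hs; rewrite le_eqVlt; apply/orP; left.
by apply/eqP; apply: eq_bigr => i _; rewrite EFinM fineK.
Qed.

Lemma Dbar_lip pb : Dbar pb -> exists L : 'I_I -> R,
  [/\ forall i, 0 <= L i, \sum_(i < I) i.+1%:R * L i < 2^-1 &
      forall i x y, 0 <= x -> 0 <= y -> `|pb i x - pb i y| <= L i * `|x - y|].
Proof.
move=> [hC hs].
have [L [hL hL0 hLs]] := sum_fin (fun i => supq_ge0 (isC_mono (hC i))) hs.
exists L; split => // i; apply: supq_lip => //; exact: isC_mono.
Qed.

Lemma Dbar_intro pb (L : 'I_I -> R) :
  (forall i, pb i 0 = 0) ->
  (forall i x y, 0 <= x -> x <= y -> pb i x <= pb i y) ->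
  (forall i, 0 <= L i) -> \sum_(i < I) i.+1%:R * L i < 2^-1 ->
  (forall i x y, 0 <= x -> 0 <= y -> `|pb i x - pb i y| <= L i * `|x - y|) ->
  Dbar pb.
Proof.
move=> h0 hm hL0 hLs hlip; split.
  move=> i; split => //.
  - by apply: (lip_cont (hL0 i)); exact: hlip.
  - exact: hm.
  - by move=> x x0; rewrite -(h0 i); apply: hm.
have H : (\sum_(i < I) (i.+1%:R)%:E * supquot (pb i) id <=
    \sum_(i < I) (i.+1%:R)%:E * (L i)%:E)%E.
  apply: lee_sum => i _; apply: lee_wpmul2l; first by rewrite lee_fin.
  apply: ge_ereal_sup => x [u1 [u2 [h1 h2 hne ->]]]; rewrite lee_fin /=.
  apply: le_trans (ler_norm _) _.
  have hd : 0 < `|u1 - u2| by rewrite normr_gt0 subr_eq0; apply/eqP.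
  rewrite normrM normrV; last by rewrite unitfE subr_eq0; apply/eqP.
  by rewrite ler_pdivrMr //; apply: hlip.
apply: le_lt_trans H _.
under eq_bigr do rewrite -EFinM.
by rewrite sumEFin lte_fin.
Qed.


Lemma max0_ge0 (x : R) : 0 <= Num.max x 0.
Proof. by case: (leP x 0) => h; lra. Qed.

Lemma max0_mono (x y : R) : x <= y -> Num.max x 0 <= Num.max y 0.
Proof. by move=> h; case: (leP x 0); case: (leP y 0) => h1 h2; lra. Qed.

Lemma Dset_of psi pb : Fset psi -> Dbar pb -> eqI (Upsilon psi) pb -> Dset psi.
Proof.
move=> hF [hC hs] he; split => //.
suff E : forall i, supquot (psi i) (phi psi i) = supquot (pb i) id.
  by under eq_bigr do rewrite E.
move=> i; rewrite supquot_Ups //; rewrite /supquot; congr ereal_sup.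
by apply/seteqP; split => x [u1 [u2 [h1 h2 hne ->]]]; exists u1, u2; split => //;
  rewrite /= !he.
Qed.

Lemma Ups_mono psi : Fset psi -> forall (i : 'I_I) x y, 0 <= x -> x <= y ->
  Upsilon psi i x <= Upsilon psi i y.
Proof.
move=> hF i x y x0 xy; have [_ hs _ _] := Fset_phi hF i.
have [a0 ha] := finv_spec hF i x0; have [b0 hb] := finv_spec hF i (le_trans x0 xy).
rewrite /Upsilon; apply: (isC_mono (hF.1 i)) => //.
case: (leP (finv (phi psi i) x) (finv (phi psi i) y)) => // h.
by have := hs _ _ b0 h; rewrite ha hb ltNge xy.
Qed.

Lemma Ups0 psi : Fset psi -> forall i : 'I_I, Upsilon psi i 0 = 0.
Proof.
move=> hF i; have [h0 _ _ _] := Fset_phi hF i.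
rewrite /Upsilon -{1}h0 finv_phi //.
by case: (hF.1 i).
Qed.

Lemma partA1 psi : Dset psi -> Dbar (Upsilon psi).
Proof.
move=> [hF hs].
have E := supquot_Ups hF.
have {}hs : (\sum_(i < I) (i.+1%:R)%:E * supquot (Upsilon psi i) id < (2^-1)%:E)%E.
  by under eq_bigr do rewrite -E.
have [L [hL hL0 hLs]] := sum_fin (fun i => supq_ge0 (Ups_mono hF i)) hs.
apply: (Dbar_intro (L := L)) => //.
- exact: Ups0.
- exact: Ups_mono.
- by move=> i; apply: supq_lip => //; exact: Ups_mono.
Qed.

Lemma partA2 psi1 psi2 : Dset psi1 -> Dset psi2 ->
  eqI (Upsilon psi1) (Upsilon psi2) -> eqI psi1 psi2.
Proof.
move=> h1 h2 he.
have [L [hL0 hLs hlip]] := Dbar_lip (partA1 h1).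
have hF1 := h1.1; have hF2 := h2.1.
move=> i u u0.
pose a j := phi psi1 j u; pose b j := phi psi2 j u.
have ha0 : forall j, 0 <= a j by move=> j; have [_ _ hn _] := Fset_phi hF1 j; exact: hn.
have hb0 : forall j, 0 <= b j by move=> j; have [_ _ hn _] := Fset_phi hF2 j; exact: hn.
have hpa : forall j, psi1 j u = Upsilon psi1 j (a j) by move=> j; rewrite /Upsilon finv_phi.
have hpb : forall j, psi2 j u = Upsilon psi1 j (b j) by move=> j; rewrite he // /Upsilon finv_phi.
pose Q := \sum_(j < I) L j * `|a j - b j|.
have hd : forall k : 'I_I, `|a k - b k| <= 2 * k.+1%:R * Q.
  move=> k.
  have E : forall X Y : R, (u - X) - (u - Y) = Y - X by move=> X Y; ring.
  rewrite /a /b /phi /phiN E -sumrB.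
  under eq_bigr do rewrite -mulrBr.
  apply: le_trans (ler_norm_sum _ _ _) _.
  rewrite /Q mulr_sumr; apply: ler_sum => j _.
  rewrite normrM (ger0_norm (x := 2 * _)) ?mulr_ge0 // hpa hpb.
  have hm : (minn k.+1 j.+1)%:R <= k.+1%:R :> R by rewrite ler_nat geq_minl.
  have hm0 : 0 <= (minn k.+1 j.+1)%:R :> R by [].
  have hl := hlip j (b j) (a j) (hb0 j) (ha0 j).
  rewrite (distrC (b j)) in hl.
  have hLd : 0 <= L j * `|a j - b j| by apply: mulr_ge0.
  have hn0 := normr_ge0 (Upsilon psi1 j (b j) - Upsilon psi1 j (a j)).
  have hn1 := normr_ge0 (a j - b j).
  have := hL0 j.
  rewrite -/(a j) -/(b j).
  set X := `|_ - _| in hl hn0 *; set Ld := L j * _ in hl hLd *.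
  set m := (minn _ _)%:R in hm hm0 *.
  nra.
have Q0 : 0 <= Q by apply: sumr_ge0 => j _; apply: mulr_ge0.
have hQ : Q <= (2 * \sum_(j < I) j.+1%:R * L j) * Q.
  have E2 : forall q, \sum_(j < I) L j * (2 * j.+1%:R * q) = (2 * \sum_(j < I) j.+1%:R * L j) * q.
    by move=> q; rewrite mulr_sumr mulr_suml; apply: eq_bigr => j _; ring.
  rewrite -E2 {1}/Q; apply: ler_sum => j _; apply: ler_wpM2l => //.
have QQ : Q = 0 by nra.
have := hd i; rewrite QQ mulr0 normr_le0 subr_eq0 => /eqP abi.
by rewrite hpa hpb abi.
Qed.

Lemma partB t pb : 0 <= t -> Dbar pb -> Dbar (theta t pb).
Proof.
move=> t0 hD; have [L [hL0 hLs hlip]] := Dbar_lip hD; have [hC _] := hD.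
apply: (Dbar_intro (L := L)) => //.
- move=> i; rewrite /theta sub0r max_r; first by case: (hC i).
  by rewrite oppr_le0 mulr_ge0.
- move=> i x y x0 xy; rewrite /theta; apply: (isC_mono (hC i)); first exact: max0_ge0.
  by apply: max0_mono; lra.
- move=> i x y x0 y0; rewrite /theta.
  apply: le_trans (hlip _ _ _ (max0_ge0 _) (max0_ge0 _)) _.
  by apply: ler_wpM2l => //; apply: max0_lip.
Qed.


Section Constr.
Variable pb : 'I_I -> R -> R.
Hypothesis hpb0 : forall i, pb i 0 = 0.
Hypothesis hpbm : forall i x y, 0 <= x -> x <= y -> 0 <= pb i y - pb i x <= y - x.

Definition pbn (n : nat) (x : R) := \sum_(j < I | val j == n) pb j x.

Lemma pbnE (j : 'I_I) x : pbn j x = pb j x.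
Proof. by rewrite /pbn (big_pred1 j). Qed.

Lemma pbn_out n x : (I <= n)%N -> pbn n x = 0.
Proof.
move=> h; rewrite /pbn big_pred0 // => k.
by apply/negbTE; rewrite neq_ltn; apply/orP; left; apply: leq_trans (ltn_ord k) h.
Qed.

Lemma pbn_prop n x y : 0 <= x -> x <= y -> 0 <= pbn n y - pbn n x <= y - x.
Proof.
move=> x0 xy; case: (ltnP n I) => h.
  by rewrite -[n]/(val (Ordinal h)) !pbnE; apply: hpbm.
by rewrite !pbn_out // subrr lexx /= subr_ge0.
Qed.

Lemma pbn0 n : pbn n 0 = 0.
Proof.
case: (ltnP n I) => h; last by rewrite pbn_out.
by rewrite -[n]/(val (Ordinal h)) pbnE.
Qed.

Fixpoint wT (n : nat) (s : R) : R * R :=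
  if n is m.+1 then
    let p := wT m s in
    let t := p.2 + pbn (I - m.+1) p.1 in (p.1 + 2 * t, t)
  else (s, 0).

Definition w n s := (wT n s).1.
Definition T n s := (wT n s).2.

Lemma wS n s : w n.+1 s = w n s + 2 * T n.+1 s. Proof. by []. Qed.
Lemma TS n s : T n.+1 s = T n s + pbn (I - n.+1) (w n s). Proof. by []. Qed.
Lemma w0 s : w 0 s = s. Proof. by []. Qed.
Lemma T0 s : T 0 s = 0. Proof. by []. Qed.

Lemma wT_zero n : w n 0 = 0 /\ T n 0 = 0.
Proof.
elim: n => [|n [h1 h2]] //.
have ht : T n.+1 0 = 0 by rewrite TS h2 h1 pbn0 addr0.
by split => //; rewrite wS ht h1 mulr0 addr0.
Qed.

Lemma wT_mono n : exists K, 0 <= K /\ forall s1 s2, 0 <= s1 -> s1 <= s2 ->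
   [/\ 0 <= T n s2 - T n s1, T n s2 - T n s1 <= K * (s2 - s1),
       s2 - s1 <= w n s2 - w n s1 & w n s2 - w n s1 <= K * (s2 - s1)].
Proof.
elim: n => [|n [K [K0 IH]]].
  exists 1; split => // s1 s2 s10 s12; rewrite !T0 !w0; split; lra.
exists (5 * K); split; first lra.
move=> s1 s2 s10 s12.
have [a b c d] := IH s1 s2 s10 s12.
have w1 : 0 <= w n s1.
  have [_ _ c' _] := IH 0 s1 (lexx 0) s10; rewrite (wT_zero n).1 in c'; lra.
have w12 : w n s1 <= w n s2 by lra.
have /andP[p1 p2] := pbn_prop (I - n.+1) w1 w12.
rewrite !wS !TS; split; nra.
Qed.

Lemma w_ge0 n s : 0 <= s -> 0 <= w n s.
Proof.
move=> s0; have [K [_ H]] := wT_mono n; have [_ _ c _] := H 0 s (lexx 0) s0.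
by rewrite (wT_zero n).1 in c; lra.
Qed.

Lemma T_sum n s : (n <= I)%N ->
  T n s = \sum_(j < I | (I - n <= j)%N) pb j (w (I - j.+1) s).
Proof.
elim: n => [|n IH] hn.
  by rewrite T0 big_pred0 // => j; rewrite subn0 leqNgt ltn_ord.
rewrite TS IH ?(ltnW hn) //.
have hj : (I - n.+1 < I)%N by lia.
rewrite [RHS](bigD1 (Ordinal hj)) /=; last exact: leqnn.
rewrite addrC; congr (_ + _).
  apply: eq_bigl => j.
rewrite -[j != Ordinal hj]/(nat_of_ord j != (I - n.+1)%N).
  apply/idP/andP => [h|[h1 /eqP h2]]; first by split; [lia | apply/eqP; lia].
  lia.
rewrite -[(I - n.+1)%N]/(nat_of_ord (Ordinal hj)) pbnE; congr (pb _ (w _ s)) => /=; lia.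
Qed.

Lemma w_sum k s : (k <= I)%N ->
  w (I - k) s = w I s - \sum_(j < I) 2 * (minn k j.+1)%:R * pb j (w (I - j.+1) s).
Proof.
elim: k => [|k IH] hk.
  by rewrite subn0 big1 ?subr0 // => j _; rewrite min0n mulr0 mul0r.
have hIk : (I - k = (I - k.+1).+1)%N by lia.
have := wS (I - k.+1) s; rewrite -hIk => E.
have := IH (ltnW hk); rewrite E T_sum ?leq_subr // subKn ?(ltnW hk) // => E2.
have -> : w (I - k.+1) s = w I s - \sum_(j < I) 2 * (minn k j.+1)%:R * pb j (w (I - j.+1) s)
   - 2 * \sum_(j < I | (k <= j)%N) pb j (w (I - j.+1) s) by lra.
rewrite -addrA -opprD; congr (_ - _).
rewrite [X in _ + 2 * X]big_mkcond mulr_sumr -big_split; apply: eq_bigr => j _ /=.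
case: leqP => h.
  rewrite (minn_idPl (_ : k.+1 <= j.+1)%N) // (minn_idPl (_ : k <= j.+1)%N); last by lia.
  by rewrite -natr1; ring.
rewrite (minn_idPr (_ : j.+1 <= k.+1)%N) 1?ltnW // (minn_idPr (_ : j.+1 <= k)%N) //.
by rewrite mulr0 addr0.
Qed.

Definition F s := w I s.
Definition G := finv F.

Lemma F0 : F 0 = 0. Proof. exact: (wT_zero I).1. Qed.

Lemma F_le s1 s2 : 0 <= s1 -> s1 <= s2 -> s2 - s1 <= F s2 - F s1.
Proof. by move=> h1 h2; have [K [_ H]] := wT_mono I; have [] := H _ _ h1 h2. Qed.

Lemma G_spec u : 0 <= u -> 0 <= G u /\ F (G u) = u.
Proof.
move=> u0; rewrite /G /finv; apply: (@xgetPex _ 0 [set s | 0 <= s /\ F s = u]).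
have [K [K0 H]] := wT_mono I.
have hc : {within [set x : R | 0 <= x], continuous F}.
  apply: (lip_cont K0); apply: mono_lip => x y x0 xy.
  by have [_ _ c d] := H x y x0 xy; rewrite d andbT; lra.
have [c cin hc'] : exists2 c, c \in `[0, u] & F c = u.
  apply: IVT => //.
    apply: (continuous_subspaceW (B := [set x : R | 0 <= x])) => //.
    by move=> x /=; rewrite in_itv /= => /andP[].
  have := F_le (lexx 0) u0; rewrite F0 subr0 => h.
  by rewrite min_l ?max_r ?lexx //=; lra.
by exists c; split => //; move: cin; rewrite in_itv /= => /andP[].
Qed.

Lemma G_F s : 0 <= s -> G (F s) = s.
Proof.
move=> s0; have Fs0 : 0 <= F s by have := F_le (lexx 0) s0; rewrite F0; lra.
have [g0 hg] := G_spec Fs0.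
case: (ltgtP (G (F s)) s) => // h.
- by have := F_le g0 (ltW h); rewrite hg; lra.
- by have := F_le s0 (ltW h); rewrite hg; lra.
Qed.

Lemma G0 : G 0 = 0.
Proof. by rewrite -{1}F0 G_F. Qed.

Lemma G_lip u1 u2 : 0 <= u1 -> u1 <= u2 -> 0 <= G u2 - G u1 <= u2 - u1.
Proof.
move=> u10 u12; have [a1 b1] := G_spec u10; have [a2 b2] := G_spec (le_trans u10 u12).
case: (leP (G u1) (G u2)) => h.
  by have := F_le a1 h; rewrite b1 b2 => h'; apply/andP; split; lra.
by have := F_le a2 (ltW h); rewrite b1 b2 => h'; lra.
Qed.

Definition psiC (i : 'I_I) (u : R) := pb i (w (I - i.+1) (G u)).

Lemma phiN_psiC k u : (k <= I)%N -> 0 <= u -> phiN psiC k u = w (I - k) (G u).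
Proof.
by move=> kI u0; rewrite /phiN w_sum // -/(F (G u)) (G_spec u0).2.
Qed.

Lemma psiC_lip (i : 'I_I) : exists K, 0 <= K /\ forall x y, 0 <= x -> x <= y ->
  0 <= psiC i y - psiC i x <= K * (y - x).
Proof.
have [K [K0 H]] := wT_mono (I - i.+1).
exists K; split => // x y x0 xy.
have /andP[g1 g2] := G_lip x0 xy.
have gx0 := (G_spec x0).1.
have gxy : G x <= G y by lra.
have [_ _ c d] := H (G x) (G y) gx0 gxy.
have wx0 := w_ge0 (I - i.+1) gx0.
have wxy : w (I - i.+1) (G x) <= w (I - i.+1) (G y) by lra.
have /andP[p1 p2] := hpbm i wx0 wxy.
rewrite /psiC; apply/andP; split => //; nra.
Qed.

Lemma inC_psiC : inC psiC.
Proof.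
move=> i; have [K [K0 H]] := psiC_lip i.
have h0 : psiC i 0 = 0 by rewrite /psiC G0 (wT_zero _).1 hpb0.
have hm : forall x y, 0 <= x -> x <= y -> psiC i x <= psiC i y.
  by move=> x y x0 xy; have /andP[] := H x y x0 xy; rewrite subr_ge0.
split => //.
- exact: (lip_cont K0 (mono_lip H)).
- by move=> x x0; rewrite -h0; apply: hm.
Qed.

Lemma Fset_psiC : Fset psiC.
Proof.
split; first exact: inC_psiC.
have E : forall u, 0 <= u -> phiN psiC I u = G u.
  by move=> u u0; rewrite phiN_psiC // subnn w0.
have hm : forall x y, 0 <= x -> x <= y -> 0 <= phiN psiC I y - phiN psiC I x <= 1 * (y - x).
  by move=> x y x0 xy; rewrite !E ?(le_trans x0 xy) // mul1r; apply: G_lip.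
have h0 : phiN psiC I 0 = 0 by rewrite phiN0 //; exact: inC_psiC.
split; first split => //.
- exact: (lip_cont ler01 (mono_lip hm)).
- by move=> x y x0 xy; have /andP[] := hm x y x0 xy; rewrite subr_ge0.
- by move=> x x0; rewrite -h0; have /andP[] := hm 0 x (lexx 0) x0; rewrite subr_ge0.
- move=> x y x0 xy; rewrite !E ?(le_trans x0 (ltW xy)) //.
  have /andP[g1 g2] := G_lip x0 (ltW xy).
  rewrite lt_neqAle; apply/andP; split; last by rewrite -subr_ge0.
  apply/eqP => e; have := (G_spec x0).2; rewrite e (G_spec (le_trans x0 (ltW xy))).2.
  by move=> exy; move: xy; rewrite exy ltxx.
apply/cvgryPge => A.
set M := Num.max A 0.
have M0 : 0 <= M := max0_ge0 A.
have FM0 : 0 <= F M by have := F_le (lexx 0) M0; rewrite F0; lra.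
near=> x.
have hx : F M < x by near: x; apply: nbhs_pinfty_gt; exact: num_real.
have x0 : 0 <= x by lra.
rewrite E //.
have /andP[g1 _] := G_lip FM0 (ltW hx).
rewrite G_F // in g1.
have : A <= M by rewrite /M; case: (leP A 0) => h; lra.
lra.
Unshelve. all: end_near.
Qed.

Lemma eqI_psiC : eqI (Upsilon psiC) pb.
Proof.
move=> i z z0; have [u0 hu] := finv_spec Fset_psiC i z0.
rewrite /Upsilon; move: hu.
set u := finv (phi psiC i) z => hu.
by rewrite /phi phiN_psiC // in hu; rewrite /psiC hu.
Qed.

End Constr.

Lemma partA3 pb : Dbar pb -> exists psi, Dset psi /\ eqI (Upsilon psi) pb.
Proof.
move=> hD; have [L [hL0 hLs hlip]] := Dbar_lip hD; have [hC _] := hD.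
have hL1 : forall i, L i <= 1.
  move=> i; have : i.+1%:R * L i <= \sum_(j < I) j.+1%:R * L j.
    rewrite (bigD1 i) //= lerDl; apply: sumr_ge0 => j _; apply: mulr_ge0 => //.
  have : L i <= i.+1%:R * L i by rewrite ler_peMl // ler1n.
  move=> h1 h2; have : (2^-1 : R) <= 1 by rewrite invf_le1 // ler1n.
  lra.
have hpb0 : forall i, pb i 0 = 0 by move=> i; case: (hC i).
have hpbm : forall i x y, 0 <= x -> x <= y -> 0 <= pb i y - pb i x <= y - x.
  move=> i x y x0 xy; rewrite subr_ge0 (isC_mono (hC i)) //=.
  have := hlip i y x (le_trans x0 xy) x0.
  rewrite (ger0_norm (x := y - x)) ?subr_ge0 // => h.
  apply: le_trans (ler_norm _) _; apply: le_trans h _.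
  by rewrite ler_piMl // subr_ge0.
exists (psiC pb); split; last exact: eqI_psiC.
apply: (Dset_of (pb := pb)) => //; [exact: Fset_psiC | exact: eqI_psiC].
Qed.

End S.

Local Close Scope classical_set_scope.
Unset Implicit Arguments.
Local Open Scope ring_scope.

Theorem proposition3p8 (R : realType) (I : nat) :
  (* (a) Upsilon is a bijection from D onto Dbar *)
  ((forall psi, Dset psi -> Dbar (@Upsilon R I psi)) /\
   (forall psi1 psi2 : 'I_I -> R -> R, Dset psi1 -> Dset psi2 ->
      eqI (Upsilon psi1) (Upsilon psi2) -> eqI psi1 psi2) /\
   (forall pb : 'I_I -> R -> R, Dbar pb ->
      exists psi, Dset psi /\ eqI (Upsilon psi) pb)) /\
  (* (b) theta_t(Dbar) is contained in Dbar *)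
  (forall t : R, 0 <= t -> forall pb : 'I_I -> R -> R, Dbar pb -> Dbar (theta t pb)) /\
  (* (c) Upsilon^{-1} o theta_t o Upsilon (D) is contained in D *)
  (forall t : R, 0 <= t -> forall psi : 'I_I -> R -> R, Dset psi ->
     (exists psi', Dset psi' /\ eqI (Upsilon psi') (theta t (Upsilon psi))) /\
     (forall psi', Fset psi' -> eqI (Upsilon psi') (theta t (Upsilon psi)) ->
        Dset psi')).
Proof.
split; [split; [|split] | split].
- move=> psi; exact: partA1.
- move=> psi1 psi2; exact: partA2.
- move=> pb; exact: partA3.
- move=> t t0 pb; exact: partB.
- move=> t t0 psi hD; split.
    exact: partA3 (partB t0 (partA1 hD)).
  move=> psi' hF he; exact: (Dset_of hF (partB t0 (partA1 hD)) he).
Qed.
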